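(* Consider the coded distributed inference model below with decoding at the users. For any coding scheme, the total latency $\tau_u=\mathbb{E}[L_c]+\mathbb{E}[L_{dec}^u]+\mathbb{E}[L_d^u]$ satisfies $$\tau_u\ \ge\ \mathbb{E}\Big[\min_{p\in\{k,\dots,e\mu k\}}\big(\underline{L}_c(\Lambda,p)+\underline{L}_d^u(p)\big)\Big],$$ where the expectation is over the straggling times $\Lambda=(\Lambda_1,\dots,\Lambda_e)$.
   Context: Model: $e$ edge nodes, $u$ users, a $k\times r$ matrix over $\mathrm{GF}(q)$, storage parameter $\mu$ with $\mu k\in\mathbb{N}$, product time $\delta>0$, transmission rate $\nu>0$. Straggling times $\Lambda_1,\dots,\Lambda_e$ are i.i.d. exponential with mean $\beta$. A coding scheme stores $s$ coded rows at each edge node, with $k/e\le s\le\mu k$, and for each realization $\lambda$ of $\Lambda$ stops after a total number $P=P(\lambda)\in\{k,\dots,es\}$ of computed products; the computed products include $v\ge k$ distinct products, the $i$th computed $m_i\ge1$ times, with $\sum_i m_i=P$. Edge node $j$ has completed $\min\{\lfloor (t-\lambda_j)^+/\delta\rfloor, s\}$ products at time $t$, and the computation latency is $L_c=\min\{t\ge0:\sum_{j=1}^e\min\{\lfloor (t-\lambda_j)^+/\delta\rfloor,s\}\ge P\}$. The downlink latency is $L_d^u=\frac{u\log_2(q)}{\nu}\sum_i 1/m_i$, and the decoding latency $L_{dec}^u\ge 0$. Here $(x)^+=\max\{x,0\}$, $\underline{L}_c(\lambda,p)=\min\{t\ge0:\sum_{j=1}^e\min\{\lfloor (t-\lambda_j)^+/\delta\rfloor,\mu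 k\}\ge p\}$, and $\underline{L}_d^u(p)=\frac{u\log_2 q}{\nu}\frac{k^2}{p}$ if $p/k\in\mathbb{N}$, and $\underline{L}_d^u(p)=\frac{u\log_2 q}{\nu}\big(\frac{\lceil p/k\rceil k-p}{\lfloor p/k\rfloor}+\frac{p-k\lfloor p/k\rfloor}{\lceil p/k\rceil}\big)$ otherwise. *)

(* Defs.v *)
From HB Require Import structures.
From mathcomp Require Import all_boot all_order all_algebra.
From mathcomp Require Import all_classical all_reals all_analysis.
Set Implicit Arguments. Unset Strict Implicit. Unset Printing Implicit Defensive.
Import Order.TTheory GRing.Theory Num.Theory.
Local Open Scope classical_set_scope.
Local Open Scope ring_scope.

Section Defs.
Context {R : realType}.

(* Number of products completed by all edge nodes at time t, when each node
   stores [s] coded rows, product time [delta], straggling times [lam]: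
   sum_j min{ floor((t - lam_j)^+ / delta), s }. *)
Definition completed (e : nat) (delta : R) (s : nat) (lam : 'I_e -> R) (t : R)
  : nat :=
  (\sum_(j < e) minn (Num.truncn (Num.max 0 (t - lam j) / delta)%R) s)%N.

(* min { t >= 0 : completed ... t >= p } (written as the infimum; the set is
   a closed half-line [t0, +oo[ whenever nonempty, so this is its minimum). *)
Definition comp_latency (e : nat) (delta : R) (s : nat) (lam : 'I_e -> R)
  (p : nat) : R :=
  inf [set t : R | 0 <= t /\ (p <= completed delta s lam t)%N].

Definition log2 (x : R) : R := ln x / ln 2.

Definition down_latency (u q : nat) (nu : R) (ms : seq nat) : R :=
  (u%:R * log2 q%:R / nu) * \sum_(m <- ms) (m%:R)^-1.

Definition down_latency_lb (u q k : nat) (nu : R) (p : nat) : R :=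
  let c := u%:R * log2 q%:R / nu in
  let x : R := p%:R / k%:R in
  if (p%:R / k%:R : R) \is a Num.nat then c * ((k ^ 2)%:R / p%:R)
  else c * (((Num.ceil x)%:~R * k%:R - p%:R) / (Num.floor x)%:~R
            + (p%:R - k%:R * (Num.floor x)%:~R) / (Num.ceil x)%:~R).

End Defs.

Definition mutually_independent {d} {T : measurableType d} {R : realType}
  (P : probability T R) (n : nat) (X : 'I_n -> {RV P >-> R}) : Prop :=
  forall B : 'I_n -> set R, (forall i, measurable (B i)) ->
    P (\bigcap_(i in [set: 'I_n]) (X i @^-1` B i)) =
    (\prod_(i < n) P (X i @^-1` B i))%E.

(* A coding scheme, abstracted to the quantities entering the latencies:
   the number [s] of coded rows stored per edge node, and, for each realization
   [lam] of the straggling times, the total number [cs_P lam] of computed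
   products, the multiplicities [cs_mult lam] = [m_1; ...; m_v] of the v
   distinct computed products, and the decoding latency [cs_dec lam]. *)
Record coding_scheme {R : realType} (e k mk : nat) := CodingScheme {
  cs_s : nat;
  cs_s_lb : (k%:R / e%:R <= cs_s%:R :> R);
  cs_s_ub : (cs_s <= mk)%N;
  cs_P : ('I_e -> R) -> nat;
  cs_P_range : forall lam, (k <= cs_P lam <= e * cs_s)%N;
  cs_mult : ('I_e -> R) -> seq nat;
  cs_v_ge : forall lam, (k <= size (cs_mult lam))%N;
  cs_mult_pos : forall lam, all (fun m => 0 < m)%N (cs_mult lam);
  cs_mult_sum : forall lam, sumn (cs_mult lam) = cs_P lam;
  cs_dec : ('I_e -> R) -> R;
  cs_dec_ge0 : forall lam, 0 <= cs_dec lam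
}.

(* Main.v *)
Require Import Defs.
From HB Require Import structures.
From mathcomp Require Import all_boot all_order all_algebra.
From mathcomp Require Import all_classical all_reals all_analysis.
From mathcomp Require Import ring lra zify.
From mathcomp Require Import measurable_realfun.
Import Order.TTheory GRing.Theory Num.Theory.
Local Open Scope classical_set_scope.
Local Open Scope ring_scope.

Lemma inv_ge_line (R : realType) (m a : nat) : (0 < m)%N -> (0 < a)%N ->
  (2 * a%:R + 1 - m%:R) / (a%:R * (a%:R + 1)) <= (m%:R : R)^-1.
Proof.
move=> m0 a0.
have hm : (0 : R) < m%:R by rewrite ltr0n.
have ha : (0 : R) < a%:R by rewrite ltr0n.
rewrite ler_pdivrMr; last by apply: mulr_gt0 => //; lra.
rewrite [_^-1 * _]mulrC ler_pdivlMr //.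
have [h|h] := leqP m a.
  have : (m%:R : R) <= a%:R by rewrite ler_nat.
  move=> h'; have : 0 <= (a%:R - m%:R) * (a%:R + 1 - m%:R :R) by apply: mulr_ge0; lra.
  nra.
have : (a.+1%:R : R) <= m%:R by rewrite ler_nat.
rewrite -natr1 => h'; have : 0 <= (m%:R - a%:R) * (m%:R - a%:R - 1 :R) by apply: mulr_ge0; lra.
nra.
Qed.

Lemma sum_inv_ge (R : realType) (a : nat) (ms : seq nat) : (0 < a)%N ->
  all (fun m => 0 < m)%N ms ->
  ((size ms)%:R * (2 * a%:R + 1) - (sumn ms)%:R) / (a%:R * (a%:R + 1))
   <= \sum_(m <- ms) (m%:R : R)^-1.
Proof.
move=> a0; elim: ms => [|m ms IH] /=.
  by rewrite big_nil mul0r subr0 mul0r.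
move=> /andP[m0 /IH h]; rewrite big_cons.
apply: le_trans (lerD (@inv_ge_line R m a m0 a0) h).
rewrite -mulrDl; apply: ler_wpM2r.
  by rewrite invr_ge0; apply: mulr_ge0 => //; apply: addr_ge0.
by rewrite -addn1 !natrD /=; lra.
Qed.

Lemma lb_formula (R : realType) (u q k : nat) (nu : R) (p : nat) :
  (0 < k)%N -> (k <= p)%N ->
  down_latency_lb u q k nu p =
  (u%:R * log2 (q%:R : R) / nu) *
   ((k%:R * (2 * (p %/ k)%:R + 1) - p%:R) / ((p %/ k)%:R * ((p %/ k)%:R + 1))).
Proof.
move=> k0 kp; rewrite /down_latency_lb /=.
set a := (p %/ k)%N; set r := (p %% k)%N.
have hp : p = (a * k + r)%N by rewrite /a /r -divn_eq.
have rk : (r < k)%N by rewrite /r ltn_mod.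
have a0 : (0 < a)%N by rewrite /a divn_gt0.
have kR : (0 : R) < k%:R by rewrite ltr0n.
have aR : (0 : R) < a%:R by rewrite ltr0n.
have pR : (p%:R : R) = a%:R * k%:R + r%:R by rewrite hp natrD natrM.
have rR : (r%:R : R) < k%:R by rewrite ltr_nat.
have rR0 : (0 : R) <= r%:R by [].
have xE : (p%:R / k%:R : R) = a%:R + r%:R / k%:R.
  by rewrite pR mulrDl mulfK // gt_eqF.
have fl : Num.floor (p%:R / k%:R : R) = a%:Z.
  apply: floor_def; rewrite xE intrD /= !pmulrn; apply/andP; split.
    by rewrite lerDl divr_ge0 // ltW.
  by rewrite ltrD2l ltr_pdivrMr // mul1r.
clearbody a.
case: ifPn => hnat.
  have r0 : r = 0%N.
    move/natrP: hnat => [n hn].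
    have : (p%:R : R) = n%:R * k%:R by rewrite -hn mulfVK // gt_eqF.
    rewrite -natrM => /eqP; rewrite eqr_nat => /eqP pn.
    move: rk; rewrite /r pn modnMl; done.
  move: pR; rewrite r0 addr0 => pR.
  congr (_ * _); rewrite pR; field.
  by apply/and3P; split; rewrite gt_eqF //; lra.
have r0 : (0 < r)%N.
  rewrite lt0n; apply: contra hnat => /eqP r0.
  by rewrite xE r0 mul0r addr0 natr_nat.
have cl : Num.ceil (p%:R / k%:R : R) = (a.+1)%:Z.
  apply: ceil_def; rewrite xE /=.
  have rR1 : (0 : R) < r%:R by rewrite ltr0n.
  have -> : ((a.+1)%:Z - 1)%:~R = (a%:R : R) by rewrite -addn1 PoszD addrK.
  have -> : ((a.+1)%:Z)%:~R = (a%:R : R) + 1 by rewrite natr1.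
  apply/andP; split.
    by rewrite ltrDl divr_gt0.
  by rewrite lerD2l ler_pdivrMr // mul1r ltW.
rewrite fl cl; congr (_ * _).
have -> : ((a.+1)%:Z)%:~R = (a%:R : R) + 1 by rewrite natr1.
have -> : ((a)%:Z)%:~R = (a%:R : R) by [].
rewrite pR; field.
by apply/andP; split; rewrite gt_eqF //; lra.
Qed.

Lemma comp_latency_ge0 (R : realType) (e : nat) (delta : R) s (lam : 'I_e -> R) p :
  0 <= comp_latency delta s lam p.
Proof.
rewrite /comp_latency; set A := [set t | _].
have [->|/set0P ne] := eqVneq A set0; first by rewrite inf0.
by apply: lb_le_inf => // t [].
Qed.

Lemma completed_mono (R : realType) (e : nat) (delta : R) s s' (lam : 'I_e -> R) t : (s <= s')%N ->
  (completed delta s lam t <= completed delta s' lam t)%N.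
Proof.
move=> ss; rewrite /completed; apply: leq_sum => j _; lia.
Qed.

Lemma completed_ne (R : realType) (e : nat) (delta : R) s (lam : 'I_e -> R) p :
  0 < delta -> (p <= e * s)%N ->
  [set t : R | 0 <= t /\ (p <= completed delta s lam t)%N] !=set0.
Proof.
move=> d0 pes.
exists (\sum_(j < e) `|lam j| + s%:R * delta); split.
  by apply: addr_ge0; [apply: sumr_ge0 => *| apply: mulr_ge0 => //; apply: ltW].
apply: (leq_trans pes); rewrite /completed.
have -> : (e * s = \sum_(j < e) s)%N by rewrite sum_nat_const card_ord.
apply: leq_sum => j _.
have hj : lam j <= \sum_(i < e) `|lam i|.
  rewrite (bigD1 j) //=; apply: le_trans (ler_norm _) _.
  by rewrite lerDl sumr_ge0.
have hs : 0 <= (s%:R : R) * delta by apply: mulr_ge0 => //; apply: ltW.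
rewrite leq_min leqnn andbT.
rewrite (_ : Num.max _ _ = \sum_(i < e) `|lam i| + s%:R * delta - lam j); last first.
  by apply/max_idPr; lra.
rewrite truncn_ge_nat; last by apply: divr_ge0; [lra| apply: ltW].
by rewrite ler_pdivlMr //; lra.
Qed.

Lemma comp_latency_mono (R : realType) (e : nat) (delta : R) s s' (lam : 'I_e -> R) p :
  0 < delta -> (s <= s')%N -> (p <= e * s)%N ->
  comp_latency delta s' lam p <= comp_latency delta s lam p.
Proof.
move=> d0 ss pes; rewrite /comp_latency.
apply: lb_le_inf; first exact: completed_ne.
move=> t [t0 ht]; apply: ge_inf; first by exists 0 => y [].
split => //; apply: leq_trans ht _; exact: completed_mono.
Qed.

Lemma le_int_nm d (T : measurableType d) (R : realType)
  (mu : {measure set T -> \bar R}) (f g : T -> \bar R) :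
  (forall x, (0 <= f x)%E) -> (forall x, (f x <= g x)%E) ->
  (\int[mu]_x f x <= \int[mu]_x g x)%E.
Proof.
move=> f0 fg; have g0 x : (0 <= g x)%E by apply: le_trans (f0 x) (fg x).
rewrite !ge0_integralE //; apply: ereal_sup_le => _ [h hf <-].
exists h => //= x; apply: le_trans (hf x) _.
by rewrite /patch; case: ifP.
Qed.

Lemma bigmin_le_seq (R : realType) (r : seq nat) (i0 : R) (G : nat -> R) x :
  x \in r -> \big[Num.min/i0]_(p <- r) G p <= G x.
Proof.
elim: r => [//|a r IH]; rewrite in_cons big_cons => /orP[/eqP->|/IH h].
  by rewrite ge_min lexx.
by rewrite ge_min h orbT.
Qed.

Lemma down_ge (R : realType) (u q k : nat) (nu : R) (ms : seq nat) :
  (0 < k)%N -> (k <= size ms)%N -> all (fun m => 0 < m)%N ms ->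
  0 <= u%:R * log2 (q%:R : R) / nu ->
  down_latency_lb u q k nu (sumn ms) <= down_latency u q nu ms.
Proof.
move=> k0 ks ms0 c0.
have kp : (k <= sumn ms)%N.
  apply: leq_trans ks _; elim: ms ms0 => //= m ms IH /andP[m0 /IH]; lia.
rewrite lb_formula // /down_latency; apply: ler_wpM2l => //.
set a := (sumn ms %/ k)%N.
have a0 : (0 < a)%N by rewrite /a divn_gt0.
apply: le_trans (@sum_inv_ge R a ms a0 ms0).
have aR : (0 : R) < a%:R by rewrite ltr0n.
apply: ler_wpM2r; first by rewrite invr_ge0; apply: mulr_ge0; lra.
have : (k%:R : R) <= (size ms)%:R by rewrite ler_nat.
move=> h; apply: lerB => //; apply: ler_wpM2r => //; lra.
Qed.

Lemma lb_ge0 (R : realType) (u q k : nat) (nu : R) p :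
  (0 < k)%N -> (k <= p)%N -> 0 <= u%:R * log2 (q%:R : R) / nu ->
  0 <= down_latency_lb u q k nu p.
Proof.
move=> k0 kp c0; rewrite lb_formula //; apply: mulr_ge0 => //.
set a := (p %/ k)%N.
have : (p < a.+1 * k)%N by apply: ltn_ceil.
move=> h; have hp : (p <= k * (2 * a + 1))%N by lia.
have : (p%:R : R) <= (k * (2 * a + 1))%:R by rewrite ler_nat.
rewrite natrM natrD natrM => h'.
apply: divr_ge0; first by rewrite subr_ge0.
by apply: mulr_ge0 => //; apply: addr_ge0.
Qed.

Theorem theorem1 (R : realType) (d : measure_display) (T : measurableType d)
  (P : probability T R)
  (e u k q mk : nat) (mu delta nu beta : R)
  (He : (0 < e)%N) (Hu : (0 < u)%N) (Hk : (0 < k)%N)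
  (Hq : exists p n : nat, prime p /\ q = (p ^ n.+1)%N)
  (Hmu : mu * k%:R = mk%:R)
  (Hdelta : 0 < delta) (Hnu : 0 < nu) (Hbeta : 0 < beta)
  (Lam : 'I_e -> {RV P >-> R})
  (HLam_exp : forall j A, measurable A ->
     distribution P (Lam j) A = exponential_prob beta^-1 A)
  (HLam_indep : mutually_independent (Lam))
  (S : @coding_scheme R e k mk)
  (Hmeas_c : measurable_fun [set: T] (fun w =>
     comp_latency delta (cs_s S) (fun j => Lam j w) (cs_P S (fun j => Lam j w))))
  (Hmeas_dec : measurable_fun [set: T] (fun w => cs_dec S (fun j => Lam j w)))
  (Hmeas_d : measurable_fun [set: T] (fun w =>
     down_latency u q nu (cs_mult S (fun j => Lam j w)))) :
  let lam w := fun j => Lam j w in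
  let F (l : 'I_e -> R) (p : nat) :=
    comp_latency delta mk l p + down_latency_lb u q k nu p in
  ('E_P[fun w => comp_latency delta (cs_s S) (lam w) (cs_P S (lam w))]
   + 'E_P[fun w => cs_dec S (lam w)]
   + 'E_P[fun w => down_latency u q nu (cs_mult S (lam w))] >=
   'E_P[fun w => \big[Num.min/F (lam w) k]_(k <= p < (e * mk).+1) F (lam w) p])%E.
Proof.
pose lam w := fun j => Lam j w.
pose F (l : 'I_e -> R) (p : nat) :=
    comp_latency delta mk l p + down_latency_lb u q k nu p.
change ('E_P[fun w => comp_latency delta (cs_s S) (lam w) (cs_P S (lam w))]
   + 'E_P[fun w => cs_dec S (lam w)]
   + 'E_P[fun w => down_latency u q nu (cs_mult S (lam w))] >=
   'E_P[fun w => \big[Num.min/F (lam w) k]_(k <= p < (e * mk).+1) F (lam w) p])%E.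
have c0 : 0 <= u%:R * log2 (q%:R : R) / nu.
  apply: divr_ge0; last exact: ltW.
  apply: mulr_ge0 => //; apply: divr_ge0.
    apply: ln_ge0; case: Hq => p [n [pp ->]].
    by rewrite ler1n expn_gt0 prime_gt0.
  by apply: ltW; apply: ln_gt0; rewrite ltr1n.
have f10 w : 0 <= comp_latency delta (cs_s S) (lam w) (cs_P S (lam w)).
  exact: comp_latency_ge0.
have f20 w : 0 <= cs_dec S (lam w) by apply: cs_dec_ge0.
have f30 w : 0 <= down_latency u q nu (cs_mult S (lam w)).
  rewrite /down_latency; apply: mulr_ge0 => //.
  by apply: sumr_ge0 => m _; rewrite invr_ge0.
have f40 w : 0 <= \big[Num.min/F (lam w) k]_(k <= p < (e * mk).+1) F (lam w) p.
  have Fge p : (k <= p)%N -> 0 <= F (lam w) p.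
    move=> kp; apply: addr_ge0; first exact: comp_latency_ge0.
    exact: lb_ge0.
  rewrite big_seq; apply: le_bigmin; first exact: Fge.
  by move=> p; rewrite mem_index_iota => /andP[+ _]; apply: Fge.
have key w : \big[Num.min/F (lam w) k]_(k <= p < (e * mk).+1) F (lam w) p <=
   comp_latency delta (cs_s S) (lam w) (cs_P S (lam w)) + cs_dec S (lam w)
   + down_latency u q nu (cs_mult S (lam w)).
  have /andP[kP Pes] := cs_P_range S (lam w).
  have sm := cs_s_ub S.
  apply: le_trans (@bigmin_le_seq R _ _ _ (cs_P S (lam w)) _) _.
    rewrite mem_index_iota kP ltnS; apply: leq_trans Pes _; exact: leq_mul.
  rewrite /F -addrA [cs_dec _ _ + _]addrC addrA.
  apply: ler_wpDr => //; apply: lerD.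
    exact: comp_latency_mono.
  rewrite -(cs_mult_sum S (lam w)); apply: down_ge => //.
    exact: cs_v_ge.
  exact: cs_mult_pos.
rewrite !expectation.unlock.
rewrite -ge0_integralD //; try (by move=> w _; rewrite lee_fin);
  try (by apply/measurable_EFinP).
rewrite -ge0_integralD //; try (by move=> w _; rewrite lee_fin);
  try (by apply/measurable_EFinP);
  try (by move=> w _; rewrite -EFinD lee_fin addr_ge0);
  try (by apply: emeasurable_funD; apply/measurable_EFinP).
apply: le_int_nm => w; first by rewrite lee_fin.
by rewrite -!EFinD lee_fin.
Qed.
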